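(* Let $q$ be a power of $2$. Then in ${\rm PG}(4,q)$ there exist a set $\mathcal L$ of $q^3+1$ pairwise skew lines and a set $\mathcal P$ of $q^3+1$ planes any two of which intersect in exactly one point, such that no line of $\mathcal L$ is contained in a plane of $\mathcal P$. *)

(* Defs.v *)
From mathcomp Require Import all_boot all_order all_algebra all_field.
Set Implicit Arguments. Unset Strict Implicit. Unset Printing Implicit Defensive.
Import GRing.Theory.
Local Open Scope ring_scope.

(* PG(n,F) is modelled by the lattice of subspaces of F^(n+1) = 'rV[F]_(n.+1).
   Points = 1-dim subspaces, lines = 2-dim, planes = 3-dim. *)
Definition PG_line (F : fieldType) (n : nat) (U : {vspace 'rV[F]_n.+1}) : Prop :=
  \dim U = 2%N.
Definition PG_plane (F : fieldType) (n : nat) (U : {vspace 'rV[F]_n.+1}) : Prop :=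
  \dim U = 3%N.
Definition skew_lines (F : fieldType) (n : nat) (U V : {vspace 'rV[F]_n.+1}) : Prop :=
  (U :&: V)%VS = 0%VS.
Definition meet_in_one_point (F : fieldType) (n : nat) (U V : {vspace 'rV[F]_n.+1}) : Prop :=
  \dim (U :&: V) = 1%N.

(* Main.v *)
Require Import Defs.
From mathcomp Require Import all_boot all_order all_algebra all_field.
From mathcomp Require Import ring.

(* Construction (valid for any finite field): fix a cubic x^3 - c2 x^2 - c1 x - c0
   without roots.  Lines: graphs {(u, u M(a))} for a not on the line F e1, plus
   the opposite regulus of {L(x e1)} u {0 x <e1,e3>}.  Planes: graphs
   {(x N(b), x)} and F^2 x <e4>.  A trace identity shows M(a) N(b) <> I. *)
Module Helpers.
Set Implicit Arguments. Unset Strict Implicit. Unset Printing Implicit Defensive.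
Import GRing.Theory.
Local Open Scope ring_scope.

Lemma exists_cubic (F : finFieldType) :
  exists c : F * F * F, forall m : F, m ^+ 3 != c.2 * m ^+ 2 + c.1.2 * m + c.1.1.
Proof.
pose g (x : F * F * F) : F * F * F :=
  (x.1.1 ^+ 3 - x.2 * x.1.1 ^+ 2 - x.1.2 * x.1.1, x.1.2, x.2).
have: [exists c : F * F * F, [forall m : F, m ^+ 3 != c.2 * m ^+ 2 + c.1.2 * m + c.1.1]].
  apply: negbNE; apply/negP => /existsPn H.
  have surj : forall y, y \in codom g.
    move=> [[c0 c1] c2]; have /forallPn [m /negPn /eqP Hm] := H ((c0, c1), c2).
    have -> : ((c0, c1), c2) = g ((m, c1), c2).
      rewrite /g /= Hm /=; congr (_, _, _). ring.
    exact: codom_f.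
  have : #|[seq g x | x in {: (F * F * F)%type}]| == #|{: (F * F * F)%type}|.
    rewrite eqn_leq leq_image_card /=.
    apply: subset_leq_card; apply/subsetP => y _; exact: surj.
  move/image_injP => inj.
  have := inj ((0, 0), 1) ((1, 0), 1) isT isT.
  rewrite /g /= => E.
  have : ((0 : F, 0 : F), 1 : F) = ((1, 0), 1).
    apply: E; congr (_, _, _); ring.
  case=> /eqP; by rewrite eq_sym oner_eq0.
by case/existsP => c /forallP Hc; exists c.
Qed.


Section Geo.
Variable F : finFieldType.

Definition r5 (x0 x1 x2 x3 x4 : F) : 'rV[F]_5 :=
  \row_(j < 5) [:: x0; x1; x2; x3; x4]`_j.

Lemma r5_scale k x0 x1 x2 x3 x4 :
  k *: r5 x0 x1 x2 x3 x4 = r5 (k * x0) (k * x1) (k * x2) (k * x3) (k * x4).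
Proof. by apply/rowP => -[[|[|[|[|[|j]]]]] Hj]; rewrite !mxE. Qed.

Lemma r5_add x0 x1 x2 x3 x4 y0 y1 y2 y3 y4 :
  r5 x0 x1 x2 x3 x4 + r5 y0 y1 y2 y3 y4 =
  r5 (x0 + y0) (x1 + y1) (x2 + y2) (x3 + y3) (x4 + y4).
Proof. by apply/rowP => -[[|[|[|[|[|j]]]]] Hj]; rewrite !mxE //= addr0. Qed.

Lemma r5_inj x0 x1 x2 x3 x4 y0 y1 y2 y3 y4 :
  r5 x0 x1 x2 x3 x4 = r5 y0 y1 y2 y3 y4 ->
  [/\ x0 = y0, x1 = y1, x2 = y2, x3 = y3 & x4 = y4].
Proof.
move/rowP => H.
have := H (@Ordinal 5 0 isT); have := H (@Ordinal 5 1 isT);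
have := H (@Ordinal 5 2 isT); have := H (@Ordinal 5 3 isT);
have := H (@Ordinal 5 4 isT); rewrite !mxE /=.
by move=> *; split.
Qed.

Lemma r5_0 : r5 0 0 0 0 0 = 0.
Proof. by apply/rowP => -[[|[|[|[|[|j]]]]] Hj]; rewrite !mxE. Qed.

Lemma mem1P (x v : 'rV[F]_5) : v \in <<[:: x]>>%VS -> exists s, v = s *: x.
Proof.
rewrite span_cons span_nil addv0 => /vlineP [s ->]; by exists s.
Qed.

Lemma mem2P (x y v : 'rV[F]_5) : v \in <<[:: x; y]>>%VS ->
  exists s t, v = s *: x + t *: y.
Proof.
rewrite span_cons => /memv_addP [u /vlineP [s ->] [w /mem1P [t ->] ->]].
by exists s, t.
Qed.

Lemma mem3P (x y z v : 'rV[F]_5) : v \in <<[:: x; y; z]>>%VS ->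
  exists s t u, v = s *: x + t *: y + u *: z.
Proof.
rewrite span_cons => /memv_addP [u /vlineP [s ->] [w /mem2P [t [r ->]] ->]].
by exists s, t, r; rewrite addrA.
Qed.

End Geo.


Section Alg.
Variable F : finFieldType.
Variables c0 c1 c2 : F.
Hypothesis Hc : forall m : F, m ^+ 3 != c2 * m ^+ 2 + c1 * m + c0.

Lemma c0_neq0 : c0 != 0.
Proof. have := Hc 0; by rewrite !expr0n /= !mulr0 !add0r eq_sym. Qed.

Lemma noeig_row s t d1 d2 d3 :
  s * d1 + t * d2 = 0 -> s * d2 + t * d3 = 0 ->
  s * d3 + t * (c0 * d1 + c1 * d2 + c2 * d3) = 0 ->
  (s = 0 /\ t = 0) \/ [/\ d1 = 0, d2 = 0 & d3 = 0].
Proof.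
move=> e1 e2 e3.
have [t0|tnz] := eqVneq t 0.
  rewrite t0 !mul0r !addr0 in e1 e2 e3.
  have [s0|snz] := eqVneq s 0; first by left.
  right; split; apply/eqP.
  - by move/eqP: e1; rewrite mulf_eq0 (negbTE snz).
  - by move/eqP: e2; rewrite mulf_eq0 (negbTE snz).
  - by move/eqP: e3; rewrite mulf_eq0 (negbTE snz).
right.
pose m := - s / t.
have h2 : d2 = m * d1.
  have -> : d2 = (s * d1 + t * d2 - s * d1) / t by field.
  by rewrite e1 /m; field.
have h3 : d3 = m * d2.
  have -> : d3 = (s * d2 + t * d3 - s * d2) / t by field.
  by rewrite e2 /m; field.
have h4 : c0 * d1 + c1 * d2 + c2 * d3 = m * d3.
  have -> : c0 * d1 + c1 * d2 + c2 * d3 =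
     (s * d3 + t * (c0 * d1 + c1 * d2 + c2 * d3) - s * d3) / t by field.
  by rewrite e3 /m; field.
rewrite h3 h2 in h4.
have E : d1 * (m ^+ 3 - (c2 * m ^+ 2 + c1 * m + c0)) = 0.
  transitivity (m * (m * (m * d1)) - (c0 * d1 + c1 * (m * d1) + c2 * (m * (m * d1)))).
    by ring.
  by rewrite -h4 subrr.
move/eqP: E; rewrite mulf_eq0 subr_eq0 (negbTE (Hc m)) orbF => /eqP d10.
by rewrite h3 h2 d10 !mulr0.
Qed.

Lemma noeig_col m d1 d2 d3 :
  c0 * d3 = m * d1 -> d1 + c1 * d3 = m * d2 -> d2 + c2 * d3 = m * d3 ->
  [/\ d1 = 0, d2 = 0 & d3 = 0].
Proof.
move=> e1 e2 e3.
have h2 : d2 = m * d3 - c2 * d3 by rewrite -e3; ring.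
have h1 : d1 = m * d2 - c1 * d3 by rewrite -e2; ring.
have E : d3 * (m ^+ 3 - (c2 * m ^+ 2 + c1 * m + c0)) = 0.
  transitivity (m * d1 - c0 * d3); first by rewrite h1 h2; ring.
  by rewrite e1 subrr.
move/eqP: E; rewrite mulf_eq0 subr_eq0 (negbTE (Hc m)) orbF => /eqP d30.
have d20 : d2 = 0 by rewrite h2 d30; ring.
by split=> //; rewrite h1 d20 d30; ring.
Qed.

Lemma par (x1 x2 x3 w1 w2 w3 : F) :
  [|| w1 != 0, w2 != 0 | w3 != 0] ->
  x1 * w2 = x2 * w1 -> x1 * w3 = x3 * w1 -> x2 * w3 = x3 * w2 ->
  exists l, [/\ x1 = l * w1, x2 = l * w2 & x3 = l * w3].
Proof.
move=> /or3P [] nz e12 e13 e23.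
- exists (x1 / w1); split.
  + by field.
  + by apply: (mulIf nz); rewrite -e12; field.
  + by apply: (mulIf nz); rewrite -e13; field.
- exists (x2 / w2); split.
  + by apply: (mulIf nz); rewrite e12; field.
  + by field.
  + by apply: (mulIf nz); rewrite -e23; field.
- exists (x3 / w3); split.
  + by apply: (mulIf nz); rewrite e13; field.
  + by apply: (mulIf nz); rewrite e23; field.
  + by field.
Qed.

Definition cw1 (d1 d2 d3 : F) := d2 * (d2 + c2 * d3) - d3 * (d1 + c1 * d3).
Definition cw2 (d1 d2 d3 : F) := d3 * (c0 * d3) - d1 * (d2 + c2 * d3).
Definition cw3 (d1 d2 d3 : F) := d1 * (d1 + c1 * d3) - d2 * (c0 * d3).

Lemma perp2 d1 d2 d3 x1 x2 x3 :
  [|| d1 != 0, d2 != 0 | d3 != 0] ->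
  x1 * d1 + x2 * d2 + x3 * d3 = 0 ->
  x1 * (c0 * d3) + x2 * (d1 + c1 * d3) + x3 * (d2 + c2 * d3) = 0 ->
  exists l, [/\ x1 = l * cw1 d1 d2 d3, x2 = l * cw2 d1 d2 d3 & x3 = l * cw3 d1 d2 d3].
Proof.
move=> dnz xd xe.
apply: par.
- apply/negPn/negP => /norP [/negPn/eqP w1 /norP [/negPn/eqP w2 /negPn/eqP w3]].
  have [m [h1 h2 h3]] : exists m, [/\ c0 * d3 = m * d1, d1 + c1 * d3 = m * d2
                             & d2 + c2 * d3 = m * d3].
    apply: par => //.
    + apply/eqP; rewrite -subr_eq0; apply/eqP.
      by transitivity (- cw3 d1 d2 d3); [rewrite /cw3; ring | rewrite w3 oppr0].
    + apply/eqP; rewrite -subr_eq0; apply/eqP.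
      by transitivity (cw2 d1 d2 d3); [rewrite /cw2; ring | rewrite w2].
    + apply/eqP; rewrite -subr_eq0; apply/eqP.
      by transitivity (- cw1 d1 d2 d3); [rewrite /cw1; ring | rewrite w1 oppr0].
  have [z1 z2 z3] := noeig_col h1 h2 h3.
  by move: dnz; rewrite z1 z2 z3 eqxx.
- apply/eqP; rewrite -subr_eq0; apply/eqP.
  transitivity (d3 * (x1 * (c0 * d3) + x2 * (d1 + c1 * d3) + x3 * (d2 + c2 * d3))
               - (d2 + c2 * d3) * (x1 * d1 + x2 * d2 + x3 * d3)).
    by rewrite /cw1 /cw2; ring.
  by rewrite xd xe !mulr0 subr0.
- apply/eqP; rewrite -subr_eq0; apply/eqP.
  transitivity (- (d2 * (x1 * (c0 * d3) + x2 * (d1 + c1 * d3) + x3 * (d2 + c2 * d3))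
               - (d1 + c1 * d3) * (x1 * d1 + x2 * d2 + x3 * d3))).
    by rewrite /cw1 /cw3; ring.
  by rewrite xd xe !mulr0 subr0 oppr0.
- apply/eqP; rewrite -subr_eq0; apply/eqP.
  transitivity (d1 * (x1 * (c0 * d3) + x2 * (d1 + c1 * d3) + x3 * (d2 + c2 * d3))
               - (c0 * d3) * (x1 * d1 + x2 * d2 + x3 * d3)).
    by rewrite /cw2 /cw3; ring.
  by rewrite xd xe !mulr0 subr0.
Qed.

End Alg.


Section Geo2.
Variable F : finFieldType.
Variables c0 c1 c2 : F.
Hypothesis Hc : forall m : F, m ^+ 3 != c2 * m ^+ 2 + c1 * m + c0.

Lemma comb2 (s t x0 x1 x2 x3 x4 y0 y1 y2 y3 y4 : F) :
  s *: r5 x0 x1 x2 x3 x4 + t *: r5 y0 y1 y2 y3 y4 =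
  r5 (s * x0 + t * y0) (s * x1 + t * y1) (s * x2 + t * y2) (s * x3 + t * y3) (s * x4 + t * y4).
Proof. by rewrite !r5_scale r5_add. Qed.

Lemma comb3 (s t u x0 x1 x2 x3 x4 y0 y1 y2 y3 y4 z0 z1 z2 z3 z4 : F) :
  s *: r5 x0 x1 x2 x3 x4 + t *: r5 y0 y1 y2 y3 y4 + u *: r5 z0 z1 z2 z3 z4 =
  r5 (s * x0 + t * y0 + u * z0) (s * x1 + t * y1 + u * z1) (s * x2 + t * y2 + u * z2)
     (s * x3 + t * y3 + u * z3) (s * x4 + t * y4 + u * z4).
Proof. by rewrite !r5_scale !r5_add. Qed.

Definition ell (a1 a2 a3 : F) := c0 * a1 + c1 * a2 + c2 * a3.

Definition Lg (a1 a2 a3 : F) : {vspace 'rV[F]_5} :=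
  span [:: r5 1 0 a1 a2 a3; r5 0 1 a2 a3 (ell a1 a2 a3)].
Definition Lr (v1 v2 : F) : {vspace 'rV[F]_5} :=
  span [:: r5 v1 v2 0 0 0; r5 0 0 v1 0 (c0 * v2)].
Definition Pb (b1 b2 b3 : F) : {vspace 'rV[F]_5} :=
  span [:: r5 (b1 + c0 * b3) (- (c0 * b3)) 1 0 0;
        r5 (b2 + b1 + c1 * b3) (- (b1 + c1 * b3)) 0 1 0;
        r5 (b3 + b2 + c2 * b3) (- (b2 + c2 * b3)) 0 0 1].
Definition Pinf : {vspace 'rV[F]_5} :=
  span [:: r5 1 0 0 0 0; r5 0 1 0 0 0; r5 0 0 0 1 0].

Lemma skew2 (x y x' y' : 'rV[F]_5) :
  (forall s t s' t', s *: x + t *: y = s' *: x' + t' *: y' -> s = 0 /\ t = 0) ->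
  skew_lines <<[:: x; y]>>%VS <<[:: x'; y']>>%VS.
Proof.
move=> H; rewrite /skew_lines; apply/eqP; rewrite -subv0; apply/subvP => v.
rewrite memv_cap => /andP [/mem2P [s [t ->]] /mem2P [s' [t' E]]].
by rewrite memv0; have [-> ->] := H _ _ _ _ E; rewrite !scale0r addr0.
Qed.

Lemma skew_gg a1 a2 a3 a1' a2' a3' : [|| a1 != a1', a2 != a2' | a3 != a3'] ->
  skew_lines (Lg a1 a2 a3) (Lg a1' a2' a3').
Proof.
move=> ne; apply: skew2 => s t s' t'; rewrite !comb2 => /r5_inj [e0 e1 e2 e3 e4].
rewrite !mulr1 !mulr0 !addr0 in e0; rewrite !mulr1 !mulr0 !add0r in e1.
subst s' t'.
have h1 : s * (a1 - a1') + t * (a2 - a2') = 0.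
  by transitivity ((s * a1 + t * a2) - (s * a1' + t * a2')); [ring | rewrite e2 subrr].
have h2 : s * (a2 - a2') + t * (a3 - a3') = 0.
  by transitivity ((s * a2 + t * a3) - (s * a2' + t * a3')); [ring | rewrite e3 subrr].
have h3 : s * (a3 - a3') + t * (c0 * (a1 - a1') + c1 * (a2 - a2') + c2 * (a3 - a3')) = 0.
  transitivity ((s * a3 + t * ell a1 a2 a3) - (s * a3' + t * ell a1' a2' a3')).
    by rewrite /ell; ring.
  by rewrite e4 subrr.
case: (noeig_row Hc h1 h2 h3) => // -[z1 z2 z3].
by move: ne; rewrite -(subr_eq0 a1) -(subr_eq0 a2) -(subr_eq0 a3) z1 z2 z3 eqxx.
Qed.


Lemma skew_gr a1 a2 a3 v1 v2 : (a2 != 0) || (a3 != 0) -> (v1 != 0) || (v2 != 0) ->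
  skew_lines (Lg a1 a2 a3) (Lr v1 v2).
Proof.
move=> na nv; apply: skew2 => s t p q; rewrite !comb2 => /r5_inj [e0 e1 e2 e3 e4].
rewrite ?mulr1 ?mulr0 ?addr0 ?add0r in e0 e1 e2 e3 e4.
subst s t.
have h1 : p * v1 * (p * a1 - q) + p * v2 * (p * a2) = 0.
  by transitivity (p * (p * v1 * a1 + p * v2 * a2) - p * v1 * q); [ring | rewrite e2; ring].
have h2 : p * v1 * (p * a2) + p * v2 * (p * a3) = 0.
  by transitivity (p * (p * v1 * a2 + p * v2 * a3)); [ring | rewrite e3 mulr0].
have h3 : p * v1 * (p * a3) + p * v2 * (c0 * (p * a1 - q) + c1 * (p * a2) + c2 * (p * a3)) = 0.
  transitivity (p * (p * v1 * a3 + p * v2 * ell a1 a2 a3) - p * v2 * c0 * q).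
    by rewrite /ell; ring.
  by rewrite e4; ring.
case: (noeig_row Hc h1 h2 h3) => // -[_ z2 z3].
have p0 : p = 0.
  case/orP: na => nz.
  - by move/eqP: z2; rewrite mulf_eq0 (negbTE nz) orbF => /eqP.
  - by move/eqP: z3; rewrite mulf_eq0 (negbTE nz) orbF => /eqP.
by rewrite p0 !mul0r.
Qed.

Lemma skew_rr v1 v2 v1' v2' : v1 * v2' - v2 * v1' != 0 ->
  skew_lines (Lr v1 v2) (Lr v1' v2').
Proof.
move=> nd; apply: skew2 => p q p' q'; rewrite !comb2 => /r5_inj [e0 e1 e2 e3 e4].
rewrite ?mulr1 ?mulr0 ?addr0 ?add0r in e0 e1 e2 e3 e4.
have hq : q * v2 = q' * v2'.
  apply: (mulIf (c0_neq0 Hc)).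
  by transitivity (q * (c0 * v2)); [ring | rewrite e4; ring].
split.
- have : p * (v1 * v2' - v2 * v1') = 0.
    by transitivity ((p * v1) * v2' - (p * v2) * v1'); [ring | rewrite e0 e1; ring].
  by move/eqP; rewrite mulf_eq0 (negbTE nd) orbF => /eqP.
- have : q * (v1 * v2' - v2 * v1') = 0.
    by transitivity ((q * v1) * v2' - (q * v2) * v1'); [ring | rewrite e2 hq; ring].
  by move/eqP; rewrite mulf_eq0 (negbTE nd) orbF => /eqP.
Qed.

Lemma eq_lin (A B C : F) : A = B -> C = B - A -> C = 0.
Proof. by move=> -> ->; rewrite subrr. Qed.

Lemma eq_lin2 (A B C D : F) : A = B -> D = 0 -> C = (A - B) - D -> C = 0.
Proof. by move=> -> -> ->; rewrite subrr subr0. Qed.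

Lemma contra3 (A B C : F) : 0 = A -> 0 = B -> 1 = C -> A + B + C = 0 -> False.
Proof. by move=> <- <- <-; rewrite !add0r => /eqP; rewrite oner_eq0. Qed.

Lemma cap_bb b1 b2 b3 b1' b2' b3' :
  [|| b1 - b1' != 0, b2 - b2' != 0 | b3 - b3' != 0] ->
  exists v, (Pb b1 b2 b3 :&: Pb b1' b2' b3' <= <[v]>)%VS.
Proof.
move=> nd.
eexists; apply/subvP => y; rewrite memv_cap.
case/andP => /mem3P [x1 [x2 [x3 Ey]]] /mem3P [x1' [x2' [x3' E']]].
rewrite Ey in E'; move: E'; rewrite !comb3 => /r5_inj [e0 e1 e2 e3 e4].
rewrite ?mulr1 ?mulr0 ?addr0 ?add0r in e2 e3 e4.
subst x1' x2' x3'.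
have xe : x1 * (c0 * (b3 - b3')) + x2 * ((b1 - b1') + c1 * (b3 - b3'))
        + x3 * ((b2 - b2') + c2 * (b3 - b3')) = 0.
  by apply: (eq_lin e1); ring.
have xd : x1 * (b1 - b1') + x2 * (b2 - b2') + x3 * (b3 - b3') = 0.
  by apply: (eq_lin2 e0 xe); ring.
have [l [h1 h2 h3]] := perp2 Hc nd xd xe.
rewrite Ey h1 h2 h3; apply/vlineP; exists l.
by rewrite -!scalerA -!scalerDr.
Qed.

Lemma cap_binf b1 b2 b3 :
  exists v, (Pb b1 b2 b3 :&: Pinf <= <[v]>)%VS.
Proof.
eexists; apply/subvP => y; rewrite memv_cap.
case/andP => /mem3P [x1 [x2 [x3 Ey]]] /mem3P [z1 [z2 [z3 E']]].
rewrite Ey in E'; move: E'; rewrite !comb3 => /r5_inj [e0 e1 e2 e3 e4].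
rewrite ?mulr1 ?mulr0 ?addr0 ?add0r in e2 e3 e4.
rewrite Ey e2 e4 !scale0r add0r addr0; apply/vlineP; exists x2; done.
Qed.

Lemma meet1 (P Q : {vspace 'rV[F]_5}) :
  \dim P = 3%N -> \dim Q = 3%N -> (exists v, (P :&: Q <= <[v]>)%VS) ->
  meet_in_one_point P Q.
Proof.
move=> dP dQ [v sv]; rewrite /meet_in_one_point.
have h1 : (\dim (P :&: Q) <= 1)%N.
  by apply: (leq_trans (dimvS sv)); rewrite dim_vline leq_b1.
have h2 := dimv_sum_cap P Q.
have h3 : (\dim (P + Q) <= 5)%N.
  by have := dimvS (subvf (P + Q)%VS); rewrite dimvf dim_matrix.
rewrite dP dQ in h2.
apply/eqP; rewrite eqn_leq h1 /=; case: (posnP (\dim (P :&: Q))) => [c|]; last by []. rewrite c addn0 in h2; by rewrite h2 in h3.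
Qed.

Lemma contra1 (A : F) : 1 = A -> A = 0 -> False.
Proof. by move=> <- /eqP; rewrite oner_eq0. Qed.

Lemma inc_gb a1 a2 a3 b1 b2 b3 : ~~ (Lg a1 a2 a3 <= Pb b1 b2 b3)%VS.
Proof.
apply/negP => /subvP H.
have m2 : r5 0 1 a2 a3 (ell a1 a2 a3) \in
   [:: r5 1 0 a1 a2 a3; r5 0 1 a2 a3 (ell a1 a2 a3)] by rewrite !inE eqxx orbT.
have /mem3P [x1 [x2 [x3]]] := H _ (memv_span (mem_head _ _)).
rewrite !comb3 => /r5_inj [e0 e1 e2 e3 e4].
have /mem3P [y1 [y2 [y3]]] := H _ (memv_span m2).
rewrite !comb3 => /r5_inj [f0 f1 f2 f3 f4].
rewrite ?mulr1 ?mulr0 ?addr0 ?add0r in e2 e3 e4 f2 f3 f4.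
subst x1 x2 x3 y1 y2 y3.
by apply: (contra3 e1 f0 f1); rewrite /ell; ring.
Qed.

Lemma inc_rb v1 v2 b1 b2 b3 : (v1 != 0) || (v2 != 0) -> ~~ (Lr v1 v2 <= Pb b1 b2 b3)%VS.
Proof.
move=> nv; apply/negP => /subvP H.
have /mem3P [x1 [x2 [x3]]] := H _ (memv_span (mem_head _ _)).
rewrite !comb3 => /r5_inj [e0 e1 e2 e3 e4].
rewrite ?mulr1 ?mulr0 ?addr0 ?add0r in e2 e3 e4.
subst x1 x2 x3.
rewrite ?mul0r ?addr0 in e0 e1.
by move: nv; rewrite e0 e1 eqxx.
Qed.

Lemma inc_gp a1 a2 a3 : (a2 != 0) || (a3 != 0) -> ~~ (Lg a1 a2 a3 <= Pinf)%VS.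
Proof.
move=> na; apply/negP => /subvP H.
have m2 : r5 0 1 a2 a3 (ell a1 a2 a3) \in
   [:: r5 1 0 a1 a2 a3; r5 0 1 a2 a3 (ell a1 a2 a3)] by rewrite !inE eqxx orbT.
have /mem3P [x1 [x2 [x3]]] := H _ (memv_span (mem_head _ _)).
rewrite !comb3 => /r5_inj [e0 e1 e2 e3 e4].
have /mem3P [y1 [y2 [y3]]] := H _ (memv_span m2).
rewrite !comb3 => /r5_inj [f0 f1 f2 f3 f4].
rewrite ?mulr1 ?mulr0 ?addr0 ?add0r in e4 f2.
by move: na; rewrite e4 f2 eqxx.
Qed.

Lemma inc_rp v1 v2 : (v1 != 0) || (v2 != 0) -> ~~ (Lr v1 v2 <= Pinf)%VS.
Proof.
move=> nv; apply/negP => /subvP H.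
have m2 : r5 0 0 v1 0 (c0 * v2) \in
   [:: r5 v1 v2 0 0 0; r5 0 0 v1 0 (c0 * v2)] by rewrite !inE eqxx orbT.
have /mem3P [y1 [y2 [y3]]] := H _ (memv_span m2).
rewrite !comb3 => /r5_inj [f0 f1 f2 f3 f4].
rewrite ?mulr1 ?mulr0 ?addr0 ?add0r in f2 f4.
have v20 : v2 = 0.
  by move/eqP: f4; rewrite mulf_eq0 (negbTE (c0_neq0 Hc)) /= => /eqP.
by move: nv; rewrite f2 v20 eqxx.
Qed.

Lemma dim2 (x y : 'rV[F]_5) : x \notin <<[:: y]>>%VS -> y != 0 ->
  \dim <<[:: x; y]>> = 2%N.
Proof.
move=> hx hy; have : free [:: x; y] by rewrite free_cons seq1_free hx hy.
by move/eqP.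
Qed.

Lemma dim3 (x y z : 'rV[F]_5) : x \notin <<[:: y; z]>>%VS -> y \notin <<[:: z]>>%VS ->
  z != 0 -> \dim <<[:: x; y; z]>> = 3%N.
Proof.
move=> hx hy hz; have : free [:: x; y; z] by rewrite free_cons hx free_cons hy seq1_free hz.
by move/eqP.
Qed.

Lemma r5_nz (x0 x1 x2 x3 x4 : F) : [|| x0 != 0, x1 != 0, x2 != 0, x3 != 0 | x4 != 0] ->
  r5 x0 x1 x2 x3 x4 != 0.
Proof.
move=> h; apply/eqP; rewrite -r5_0 => /r5_inj [e0 e1 e2 e3 e4].
by move: h; rewrite e0 e1 e2 e3 e4 eqxx.
Qed.

Lemma dim_Lg a1 a2 a3 : \dim (Lg a1 a2 a3) = 2%N.
Proof.
apply: dim2; last by apply: r5_nz; rewrite oner_eq0 orbT.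
apply/negP => /mem1P [s]; rewrite r5_scale => /r5_inj [e0 _ _ _ _].
by move/eqP: e0; rewrite mulr0 oner_eq0.
Qed.

Lemma dim_Lr v1 v2 : (v1 != 0) || (v2 != 0) -> \dim (Lr v1 v2) = 2%N.
Proof.
move=> nv; apply: dim2.
  apply/negP => /mem1P [s]; rewrite r5_scale => /r5_inj [e0 e1 _ _ _].
  by move: nv; rewrite e0 e1 !mulr0 eqxx.
apply: r5_nz; case/orP: nv => nz; first by rewrite nz !orbT.
by rewrite mulf_neq0 ?(c0_neq0 Hc) ?orbT.
Qed.

Lemma dim_Pb b1 b2 b3 : \dim (Pb b1 b2 b3) = 3%N.
Proof.
apply: dim3.
- apply/negP => /mem2P [s [t]]; rewrite comb2 => /r5_inj [_ _ e2 _ _].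
  by move/eqP: e2; rewrite !mulr0 addr0 oner_eq0.
- apply/negP => /mem1P [s]; rewrite r5_scale => /r5_inj [_ _ _ e3 _].
  by move/eqP: e3; rewrite mulr0 oner_eq0.
- by apply: r5_nz; rewrite oner_eq0 !orbT.
Qed.

Lemma dim_Pinf : \dim Pinf = 3%N.
Proof.
apply: dim3.
- apply/negP => /mem2P [s [t]]; rewrite comb2 => /r5_inj [e0 _ _ _ _].
  by move/eqP: e0; rewrite !mulr0 addr0 oner_eq0.
- apply/negP => /mem1P [s]; rewrite r5_scale => /r5_inj [_ e1 _ _ _].
  by move/eqP: e1; rewrite mulr0 oner_eq0.
- by apply: r5_nz; rewrite oner_eq0 !orbT.
Qed.

Definition co (a : 'rV[F]_3) (k : nat) : F := a 0 (inord k).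

Lemma row3_eq (a b : 'rV[F]_3) :
  co a 0 = co b 0 -> co a 1 = co b 1 -> co a 2 = co b 2 -> a = b.
Proof.
move=> h0 h1 h2; apply/rowP => -[[|[|[|k]]] Hk] //.
- by have -> : Ordinal Hk = inord 0 by apply/val_inj; rewrite /= inordK.
- by have -> : Ordinal Hk = inord 1 by apply/val_inj; rewrite /= inordK.
- by have -> : Ordinal Hk = inord 2 by apply/val_inj; rewrite /= inordK.
Qed.

Lemma row3_neq (a b : 'rV[F]_3) : a != b ->
  [|| co a 0 != co b 0, co a 1 != co b 1 | co a 2 != co b 2].
Proof.
move=> ne; apply/negPn/negP => /norP [/negPn/eqP h0 /norP [/negPn/eqP h1 /negPn/eqP h2]].
by move: ne; rewrite (row3_eq h0 h1 h2) eqxx.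
Qed.

Definition isreg (a : 'rV[F]_3) := (co a 1 == 0) && (co a 2 == 0).

Definition Lf (o : option 'rV[F]_3) : {vspace 'rV[F]_5} :=
  match o with
  | None => Lr 0 1
  | Some a => if isreg a then Lr 1 (co a 0) else Lg (co a 0) (co a 1) (co a 2)
  end.

Definition Pf (o : option 'rV[F]_3) : {vspace 'rV[F]_5} :=
  match o with
  | None => Pinf
  | Some b => Pb (co b 0) (co b 1) (co b 2)
  end.

Lemma nreg (a : 'rV[F]_3) : ~~ isreg a -> (co a 1 != 0) || (co a 2 != 0).
Proof. by rewrite /isreg negb_and. Qed.

Lemma dim_Lf o : \dim (Lf o) = 2%N.
Proof.
case: o => [a|] /=; last by rewrite dim_Lr // oner_eq0 orbT.
by case: ifP => _; [rewrite dim_Lr // oner_eq0 | rewrite dim_Lg].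
Qed.

Lemma dim_Pf o : \dim (Pf o) = 3%N.
Proof. by case: o => [b|] /=; [rewrite dim_Pb | rewrite dim_Pinf]. Qed.

Lemma Lf_skew o o' : o != o' -> skew_lines (Lf o) (Lf o').
Proof.
case: o => [a|]; case: o' => [b|] //= ne.
- case: ifP => ra; case: ifP => rb.
  + apply: skew_rr; rewrite mul1r mulr1.
    move: ra rb ne; rewrite /isreg => /andP [/eqP a1 /eqP a2] /andP [/eqP b1 /eqP b2] ne.
    have : a != b by apply: contraNneq ne => ->.
    move/row3_neq; rewrite a1 a2 b1 b2 eqxx /= orbF => nab.
    by rewrite subr_eq0 eq_sym.
  + rewrite /skew_lines capvC; apply: skew_gr; first by apply: nreg; rewrite rb.
    by rewrite oner_eq0.
  + apply: skew_gr; first by apply: nreg; rewrite ra.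
    by rewrite oner_eq0.
  + apply: skew_gg; apply: row3_neq; by apply: contraNneq ne => ->.
- case: ifP => ra.
  + by apply: skew_rr; rewrite mulr1 mulr0 subr0 oner_eq0.
  + apply: skew_gr; first by apply: nreg; rewrite ra.
    by rewrite oner_eq0 orbT.
- case: ifP => rb.
  + by apply: skew_rr; rewrite mul0r mulr1 sub0r oppr_eq0 oner_eq0.
  + rewrite /skew_lines capvC; apply: skew_gr; first by apply: nreg; rewrite rb.
    by rewrite oner_eq0 orbT.
Qed.

Lemma Pf_meet o o' : o != o' -> meet_in_one_point (Pf o) (Pf o').
Proof.
move=> ne; apply: meet1; rewrite ?dim_Pf //.
case: o o' ne => [a|] [b|] //= ne.
- apply: cap_bb; have : a != b by apply: contraNneq ne => ->.
  by move/row3_neq; rewrite !subr_eq0.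
- exact: cap_binf.
- by rewrite capvC; apply: cap_binf.
Qed.

Lemma LP_inc o o' : ~~ (Lf o <= Pf o')%VS.
Proof.
case: o => [a|]; case: o' => [b|] /=.
- by case: ifP => ra; [apply: inc_rb; rewrite oner_eq0 | apply: inc_gb].
- case: ifP => ra; first by apply: inc_rp; rewrite oner_eq0.
  by apply: inc_gp; apply: nreg; rewrite ra.
- by apply: inc_rb; rewrite oner_eq0 orbT.
- by apply: inc_rp; rewrite oner_eq0 orbT.
Qed.

End Geo2.

End Helpers.
Import Helpers.


Theorem theorem3p9 (F : finFieldType) (h : nat) (hq : #|F| = (2 ^ h)%N) :
  exists (L P : 'I_((#|F| ^ 3).+1) -> {vspace 'rV[F]_(4.+1)}),
  [/\ injective L, injective P, (forall i, PG_line (L i)) &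
    [/\ (forall i, PG_plane (P i)),
        (forall i j, i <> j -> skew_lines (L i) (L j)),
        (forall i j, i <> j -> meet_in_one_point (P i) (P j)) &
        (forall i j, ~~ (L i <= P j)%VS)]].
Proof.
have [[[c0 c1] c2] Hc] := exists_cubic F.
have Ecard : #|{: option 'rV[F]_3}| = (#|F| ^ 3).+1.
  by rewrite card_option card_mx mul1n.
pose idx (i : 'I_((#|F| ^ 3).+1)) : option 'rV[F]_3 := enum_val (cast_ord (esym Ecard) i).
have idx_inj : injective idx.
  by move=> i j /enum_val_inj /cast_ord_inj.
have ne_idx : forall i j, i <> j -> idx i != idx j.
  by move=> i j ij; apply/eqP => /idx_inj.
exists (fun i => Lf c0 c1 c2 (idx i)), (fun i => Pf c0 c1 c2 (idx i)).
split.
- move=> i j E; apply/eqP; apply: contraT => ne.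
  have := Lf_skew Hc (ne_idx i j (elimN eqP ne)).
  rewrite /skew_lines E capvv => h0.
  by have := dim_Lf Hc (idx j); rewrite h0 dimv0.
- move=> i j E; apply/eqP; apply: contraT => ne.
  have := Pf_meet Hc (ne_idx i j (elimN eqP ne)).
  rewrite /meet_in_one_point E capvv.
  by rewrite dim_Pf.
- by move=> i; exact: (dim_Lf Hc).
split.
- by move=> i; exact: dim_Pf.
- by move=> i j ij; exact: (Lf_skew Hc (ne_idx i j ij)).
- by move=> i j ij; exact: (Pf_meet Hc (ne_idx i j ij)).
- by move=> i j; exact: (LP_inc Hc).
Qed.
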